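(* Let $H=(\mathcal{V},\mathcal{E})$ be a hypergraph. Let $\chi_{cf}(H)$ be the number of non-zero colours used in an optimal conflict-free colouring of $H$, and let $\chi_{min}=\min_{t}\chi(G_{R,t})$ be the minimum chromatic number over all co-occurrence graphs $G_{R,t}$ of $H$ (over all representative functions $t$, with $R=t(\mathcal{E})$). Then $\chi_{cf}(H)=\chi_{min}$.
   Context: A hypergraph $H=(\mathcal{V},\mathcal{E})$ has a finite vertex set $\mathcal{V}$ and a family $\mathcal{E}$ of nonempty subsets of $\mathcal{V}$ (hyperedges). A conflict-free colouring of $H$ is a function $C:\mathcal{V}\to\mathbb{N}=\{0,1,2,\dots\}$ such that for every hyperedge $E\in\mathcal{E}$ there is a colour $j\geq 1$ with $|E\cap C^{-1}(j)|=1$; colour $0$ is a special ''uncoloured'' colour and is not counted. $\chi_{cf}(H)$ is the minimum number of non-zero colours used by a conflict-free colouring. A representative function is a map $t:\mathcal{E}\to\mathcal{V}$ with $t(E)\in E$ for every $E$; $R=t(\mathcal{E})$ is its image (the set of representatives). The co-occurrence graph $G_{R,t}$ is the simple graph with vertex set $R$, in which distinct $u,v\in R$ are adjacent if and only if there is a hyperedge $E\in\mathcal{E}$ with $u,v\in E$ and $t(E)\in\{u,v\}$. $\chi(G)$ denotes the chromatic number of a graph $G$. *)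

(* Defs.v *)
From mathcomp Require Import all_boot.
From Stdlib Require Import ClassicalEpsilon.
Set Implicit Arguments. Unset Strict Implicit. Unset Printing Implicit Defensive.

Definition pb (P : Prop) : bool := if excluded_middle_informative P then true else false.
Lemma pbP (P : Prop) : reflect P (pb P).
Proof. by rewrite /pb; case: excluded_middle_informative => h; constructor. Qed.

(* A hypergraph H = (V, E): finite vertex type V, and a finite family of
   hyperedges indexed by a finite type I (E : I -> {set V}); repetitions
   allowed. *)

Section Hyp.
Variables (V I : finType) (E : I -> {set V}).

(* Conflict-free colouring: colour 0 is "uncoloured" and not counted. *)
Definition conflict_free (C : V -> nat) : Prop :=
  forall i : I, exists j : nat, 1 <= j /\ #|E i :&: [set v | C v == j]| = 1.

Definition nb_nonzero_colours (C : V -> nat) : nat :=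
  size (undup [seq C v | v <- enum V & C v != 0]).

Definition cf_with (k : nat) : Prop :=
  exists C : V -> nat, conflict_free C /\ nb_nonzero_colours C = k.

Lemma cf_with_exists (hE : forall i, E i != set0) : exists k, cf_with k.
Proof.
exists (nb_nonzero_colours (fun v => (enum_rank v).+1)).
exists (fun v => (enum_rank v).+1); split => // i.
have /set0Pn [x xE] := hE i.
exists (enum_rank x).+1; split => //.
suff -> : E i :&: [set v | (enum_rank v).+1 == (enum_rank x).+1] = [set x]
  by rewrite cards1.
apply/setP => y; rewrite !inE eqSS.
apply/andP/eqP => [[_ /eqP e]|->]; first exact: enum_rank_inj (val_inj e).
by split.
Qed.

Definition chi_cf (hE : forall i, E i != set0) : nat := ex_minn (let: ex_intro k h := cf_with_exists hE in
    ex_intro (fun k => pb (cf_with k)) k (introT (pbP _) h)).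

Definition representative (t : I -> V) : Prop := forall i, t i \in E i.

Definition reps (t : I -> V) : {set V} := [set t i | i : I].

Definition cooc_adj (t : I -> V) : rel V :=
  fun u v => [&& u != v, u \in reps t, v \in reps t &
              [exists i, [&& u \in E i, v \in E i & (t i == u) || (t i == v)]]].

End Hyp.

Section Chrom.
Variables (V : finType) (R : {set V}) (adj : rel V).

Definition proper_colouring (k : nat) (f : V -> nat) : Prop :=
  (forall v, v \in R -> f v < k) /\
  (forall u v, u \in R -> v \in R -> adj u v -> f u != f v).

Definition colourable (k : nat) : Prop := exists f, proper_colouring k f.

Lemma colourable_exists (irr : forall v, ~~ adj v v) : exists k, colourable k.
Proof.
exists #|V|, (fun v => nat_of_ord (enum_rank v)); split => [v _|u v _ _ huv].
  exact: ltn_ord.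
apply/negP => /eqP /val_inj /enum_rank_inj euv.
by move: huv; rewrite euv (negbTE (irr v)).
Qed.

Definition chromatic (irr : forall v, ~~ adj v v) : nat :=
  ex_minn (let: ex_intro k h := colourable_exists irr in
    ex_intro (fun k => pb (colourable k)) k (introT (pbP _) h)).
End Chrom.

Lemma cooc_irr (V I : finType) (E : I -> {set V}) (t : I -> V) :
  forall v, ~~ cooc_adj E t v v.
Proof. by move=> v; rewrite /cooc_adj eqxx. Qed.

Definition chi_cooc (V I : finType) (E : I -> {set V}) (t : I -> V) : nat :=
  chromatic (reps t) (cooc_irr E t).

Definition chi_min_with (V I : finType) (E : I -> {set V}) (k : nat) : Prop :=
  exists t : I -> V, representative E t /\ chi_cooc E t = k.

Lemma chi_min_exists (V I : finType) (E : I -> {set V})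
  (hE : forall i, E i != set0) : exists k, chi_min_with E k.
Proof.
pose t i := xchoose (set0Pn _ (hE i)).
exists (chi_cooc E t), t; split => // i.
exact: (xchooseP (set0Pn _ (hE i))).
Qed.

Definition chi_min (V I : finType) (E : I -> {set V})
  (hE : forall i, E i != set0) : nat := ex_minn (let: ex_intro k h := chi_min_exists hE in
    ex_intro (fun k => pb (chi_min_with E k)) k (introT (pbP _) h)).

(* Main.v *)
Require Import Defs.
From mathcomp Require Import all_boot.

Section Aux.
Variables (V I : finType) (E : I -> {set V}) (hE : forall i, E i != set0).

Lemma cf_le k : cf_with E k -> chi_cf hE <= k.
Proof.
rewrite /chi_cf; case: (cf_with_exists hE) => k0 h0.
case: ex_minnP => m _ mn hk; apply: mn; exact/pbP.
Qed.

Lemma cf_spec : cf_with E (chi_cf hE).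
Proof.
rewrite /chi_cf; case: (cf_with_exists hE) => k0 h0.
by case: ex_minnP => m /pbP.
Qed.

Lemma cm_le k : chi_min_with E k -> chi_min hE <= k.
Proof.
rewrite /chi_min; case: (chi_min_exists hE) => k0 h0.
case: ex_minnP => m _ mn hk; apply: mn; exact/pbP.
Qed.

Lemma cm_spec : chi_min_with E (chi_min hE).
Proof.
rewrite /chi_min; case: (chi_min_exists hE) => k0 h0.
by case: ex_minnP => m /pbP.
Qed.
End Aux.

Lemma chrom_le (V : finType) (R : {set V}) (adj : rel V) (irr : forall v, ~~ adj v v) k :
  colourable R adj k -> chromatic R irr <= k.
Proof.
rewrite /chromatic; case: (colourable_exists R irr) => k0 h0.
case: ex_minnP => m _ mn hk; apply: mn; exact/pbP.
Qed.

Lemma chrom_spec (V : finType) (R : {set V}) (adj : rel V) (irr : forall v, ~~ adj v v) :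
  colourable R adj (chromatic R irr).
Proof.
rewrite /chromatic; case: (colourable_exists R irr) => k0 h0.
by case: ex_minnP => m /pbP.
Qed.

Theorem theorem1 (V I : finType) (E : I -> {set V})
  (hE : forall i, E i != set0) :
  chi_cf hE = chi_min hE.
Proof.
apply/eqP; rewrite eqn_leq; apply/andP; split.
- have [t [rep ht]] := @cm_spec _ _ _ hE.
  have [f [fk fp]] := @chrom_spec V (reps t) (cooc_adj E t) (cooc_irr E t).
  rewrite /chi_cooc in ht; rewrite -ht {ht}.
  set k := chromatic _ _ in fk fp *.
  pose C v := if v \in reps t then (f v).+1 else 0.
  have cfC : conflict_free E C.
    move=> i; exists (f (t i)).+1; split => //.
    apply/eqP/cards1P; exists (t i); apply/setP => w; rewrite !inE /C.
    have tiR : t i \in reps t by apply/imsetP; exists i.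
    apply/andP/eqP => [[wE]|->]; last by rewrite rep tiR eqxx.
    case: ifP => // wR; rewrite eqSS => /eqP fw.
    apply/eqP; apply/negPn/negP => nw.
    have : cooc_adj E t w (t i).
      rewrite /cooc_adj nw wR tiR /=; apply/existsP; exists i.
      by rewrite wE rep eqxx orbT.
    by move/(fp _ _ wR tiR); rewrite fw eqxx.
  apply: (leq_trans (@cf_le _ _ _ hE _ (ex_intro _ C (conj cfC erefl)))).
  rewrite /nb_nonzero_colours.
  rewrite -(size_iota 1 k); apply: uniq_leq_size; first exact: undup_uniq.
  move=> x; rewrite mem_undup => /mapP [v]; rewrite mem_filter => /andP [].
  rewrite /C; case: ifP => [vR _ _ ->|]; last by rewrite eqxx.
  by rewrite mem_iota /= add1n ltnS fk.
- have [C [cfC hC]] := @cf_spec _ _ _ hE; rewrite -hC {hC}.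
  have ex i : exists v, [&& v \in E i, C v != 0 &
      [forall w, ((w \in E i) && (C w == C v)) ==> (w == v)]].
    have [j [j1 /eqP/cards1P [x hx]]] := cfC i.
    have : x \in E i :&: [set v | C v == j] by rewrite hx set11.
    rewrite !inE => /andP [xE /eqP Cx].
    exists x; rewrite xE Cx -lt0n j1 /=; apply/forallP => w.
    apply/implyP => /andP [wE /eqP Cw].
    have : w \in E i :&: [set v | C v == j] by rewrite !inE wE Cw eqxx.
    by rewrite hx inE.
  pose t i := xchoose (ex i).
  have tP i : [&& t i \in E i, C (t i) != 0 & [forall w, ((w \in E i) && (C w == C (t i))) ==> (w == t i)]] := xchooseP (ex i).
  have rep : representative E t by move=> i; case/and3P: (tP i).
  apply: (leq_trans (@cm_le _ _ _ hE _ (ex_intro _ t (conj rep erefl)))).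
  rewrite /chi_cooc; apply: chrom_le.
  set L := undup [seq C v | v <- enum V & C v != 0].
  have inL v : v \in reps t -> C v \in L.
    case/imsetP => i _ ->; rewrite mem_undup; apply: map_f.
    by rewrite mem_filter mem_enum andbT; case/and3P: (tP i).
  exists (fun v => index (C v) L); split => [v vR|u v uR vR].
    by rewrite index_mem inL.
  have key : C u != C v -> index (C u) L != index (C v) L.
    apply: contra => /eqP e; apply/eqP.
    by rewrite -(nth_index 0 (inL _ uR)) e nth_index // inL.
  move=> /and4P [nuv _ _ /existsP [i /and3P [uE vE tiuv]]]; apply: key.
  case/and3P: (tP i) => _ _ /forallP tu.
  case/orP: tiuv => /eqP ti; apply/eqP => Cuv.
    by move: (tu v); rewrite vE ti -Cuv eqxx /= => /eqP e; rewrite e eqxx in nuv.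
  by move: (tu u); rewrite uE ti Cuv eqxx /= => /eqP e; rewrite e eqxx in nuv.
Qed.
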